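(* Let $I=(G,\mathcal{T},p)$ be a \textsc{DAG Multicut} instance satisfying the standing assumptions below, and let $G^*$ be its degree-reduced graph, with the sets $B_i$ as in its definition. Then: (1) $|N^+_{G^*}(T^s)|\le rp$; (2) for each $1\le i\le r$, $B_i$ is the $s_i-t_i$ mincut closest to $s_i$ in $G^*$; (3) $\Phi(I')=\Phi(I)$ where $I'=(G^*,\mathcal{T},p)$; (4) a set $Z\subseteq V(G)$ is a multicut in $(G^*,\mathcal{T})$ if and only if $Z$ is a multicut in $(G,\mathcal{T})$ such that for every $1\le i\le r$ and every $v\in B_i$, either $v\in Z$ or $Z$ is a $\{v\}-\{t_i\}$ separator in $G$; in particular $I'$ is a YES instance iff $I$ admits a solution with this property; (5) $S(G^*,v)\subseteq S(G,v)$ for every $v\in V(G)$, and if $(s_i,v)\in E(G^* )$ for some $i$ then $S(G^*,v)=S(G,v)$.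
   Context: \textsc{DAG Multicut}: input a directed acyclic graph $G$, terminal pairs $\mathcal{T}=\{(s_i,t_i):1\le i\le r\}$, integer $p$; terminals are all $s_i,t_i$. Standing assumptions: all terminals are pairwise distinct, each $s_i$ has no in-neighbours, each $t_i$ has no out-neighbours, and $\mathrm{cut}_G(s_i,t_i)\le p$ for all $i$. $T^s=\{s_1,\dots,s_r\}$; $N^+_G(Y)=(\bigcup_{y\in Y}\{u:(y,u)\in E(G)\})\setminus Y$. A multicut is a set of non-terminal vertices $Z$ with $t_i$ unreachable from $s_i$ in $G\setminus Z$ for all $i$; a solution is a multicut of size $\le p$. For disjoint non-empty $X,Y$, an $X-Y$ separator is a set of non-terminal vertices disjoint from $X\cup Y$ meeting every $X$–$Y$ path; $\mathrm{cut}_G(X,Y)$ is its minimum size ($\infty$ if an arc goes from $X$ to $Y$). A minimal separator $Z$ is important if no other $X-Y$ separator $Z'$ with $|Z'|\le|Z|$ satisfies: every vertex reachable from $X$ in $G\setminus Z$ is reachable from $X$ in $G\setminus Z'$. The unique minimum-size important $X-Y$ separator is the $X-Y$ mincut closest to $Y$; the $X-Y$ mincut closest to $X$ is the $Y-X$ mincut closest to $X$ in the graph with all arcs reversed. $S(G,v)$ is the set of sources $s_i$ from which $v$ is reachable in $G$. The potential is $\Phi((G,\mathcal{T},p))=(r+1)p-\sum_i\mathrm{cut}_G(s_i,t_i)$. Degree-reduced graph $G^*$: let $B_i$ be the $s_i-t_i$ mincut closest to $s_i$ in $G$; $V(G^* )=V(G)$, its arcs are all arcs of $G$ not incident to $T^s$,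 plus, for each $1\le i\le r$, the arcs $(s_i,v)$ for all $v\in B_i$, and the arcs $(s_i,v)$ for all $v\in\bigcup_{i'=1}^r B_{i'}$ with $s_i\in S(G,v)$ such that $v$ is not reachable in $G$ from any vertex of $B_i$. *)

(* Defs.v *)
From mathcomp Require Import all_boot all_order all_algebra.
Set Implicit Arguments. Unset Strict Implicit. Unset Printing Implicit Defensive.

Section DagMulticut.
Variable V : finType.

Definition acyclic (E : rel V) : Prop := forall u v, E u v -> ~~ connect E v u.

Definition rev_rel (E : rel V) : rel V := [rel a b | E b a].

Definition avoid_rel (E : rel V) (Z : {set V}) : rel V :=
  [rel a b | [&& E a b, a \notin Z & b \notin Z]].

Definition reach (E : rel V) (Z : {set V}) (x y : V) : bool :=
  [&& x \notin Z, y \notin Z & connect (avoid_rel E Z) x y].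

Definition reach_set (E : rel V) (Z X : {set V}) : {set V} :=
  [set w | [exists x in X, reach E Z x w]].

Definition is_sep (E : rel V) (T X Y Z : {set V}) : bool :=
  [&& [disjoint Z & T], [disjoint Z & X :|: Y] &
      ~~ [exists x in X, exists y in Y, reach E Z x y]].

(* cut_G(X,Y): None encodes infinity (no separator exists) *)
Definition cut (E : rel V) (T X Y : {set V}) : option nat :=
  if [exists Z, is_sep E T X Y Z]
  then Some (\big[minn/#|V|]_(Z : {set V} | is_sep E T X Y Z) #|Z|)
  else None.

Definition minimal_sep (E : rel V) (T X Y Z : {set V}) : bool :=
  is_sep E T X Y Z &&
  [forall Z' : {set V}, (Z' \proper Z) ==> ~~ is_sep E T X Y Z'].

Definition important_sep (E : rel V) (T X Y Z : {set V}) : bool :=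
  minimal_sep E T X Y Z &&
  ~~ [exists Z' : {set V}, [&& Z' != Z, is_sep E T X Y Z', #|Z'| <= #|Z| &
        reach_set E Z X \subset reach_set E Z' X]].

(* the X - Y mincut closest to Y: the minimum-size important X-Y separator *)
Definition mincut_closest_to_target (E : rel V) (T X Y Z : {set V}) : bool :=
  important_sep E T X Y Z && (cut E T X Y == Some #|Z|).

Definition mincut_closest_to_source (E : rel V) (T X Y Z : {set V}) : bool :=
  mincut_closest_to_target (rev_rel E) T Y X Z.

Definition out_nbhd (E : rel V) (Y : {set V}) : {set V} :=
  [set u | [exists y in Y, E y u]] :\: Y.

Variable r : nat.

Definition terminals (s t : 'I_r -> V) : {set V} :=
  [set x | [exists i, (x == s i) || (x == t i)]].

Definition sources (s : 'I_r -> V) : {set V} := [set s i | i : 'I_r].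

Definition S_of (E : rel V) (s : 'I_r -> V) (v : V) : {set V} :=
  [set x | [exists i, (x == s i) && connect E (s i) v]].

Definition multicut (E : rel V) (s t : 'I_r -> V) (Z : {set V}) : bool :=
  [disjoint Z & terminals s t] &&
  [forall i, ~~ reach E Z (s i) (t i)].

Definition standing (E : rel V) (s t : 'I_r -> V) (p : nat) : Prop :=
  [/\ acyclic E, injective s /\ injective t /\ (forall i j, s i != t j),
      (forall i u, ~~ E u (s i)) /\ (forall i u, ~~ E (t i) u) &
      (forall i, exists2 k, cut E (terminals s t) [set s i] [set t i] = Some k & k <= p)].

(* potential; cut values are finite under the standing assumptions *)
Definition Phi (E : rel V) (s t : 'I_r -> V) (p : nat) : int :=
  ((r.+1 * p)%:Z -
   (\sum_(i < r) (odflt 0%N (cut E (terminals s t) [set s i] [set t i]))%:Z))%R.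

Definition degree_reduced (E : rel V) (s : 'I_r -> V) (B : 'I_r -> {set V}) : rel V :=
  [rel u v |
    [|| [&& E u v, u \notin sources s & v \notin sources s],
        [exists i, (u == s i) && (v \in B i)] |
        [exists i, [&& u == s i,
                        v \in \bigcup_(i' < r) B i',
                        s i \in S_of E s v &
                        ~~ [exists b in B i, connect E b v]]]]].

End DagMulticut.

(* Main.v *)
Require Import Defs.
From mathcomp Require Import all_boot all_order all_algebra.
Set Implicit Arguments. Unset Strict Implicit. Unset Printing Implicit Defensive.

Section Gen.
Variable V : finType.
Implicit Types (e : rel V) (Z : {set V}) (x y : V).

Lemma reach_ind e Z (P : V -> Prop) y :
  y \notin Z -> P y ->
  (forall x z, x \notin Z -> e x z -> reach e Z z y -> P z -> P x) ->
  forall x, reach e Z x y -> P x.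
Proof.
move=> yZ Py step x /and3P [xZ _ /connectP [q pq eyl]].
elim: q x xZ pq eyl => [|z q IH] x xZ /=; first by move=> _ <-.
case/andP => /and3P [exz _ zZ] pq eyl.
apply: (step x z xZ exz); last exact: IH.
rewrite /reach zZ yZ /=.
by apply/connectP; exists q.
Qed.

Lemma reach_refl e Z x : x \notin Z -> reach e Z x x.
Proof. by move=> h; rewrite /reach h connect0. Qed.

Lemma reach_cons e Z x z y : e x z -> x \notin Z -> reach e Z z y -> reach e Z x y.
Proof.
move=> exz xZ /and3P [zZ yZ c]; rewrite /reach xZ yZ /=.
apply: connect_trans c; apply: connect1; by rewrite /avoid_rel /= exz xZ zZ.
Qed.

Lemma reach_rcons e Z x z y : reach e Z x z -> e z y -> y \notin Z -> reach e Z x y.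
Proof.
move=> /and3P [xZ zZ c] ezy yZ; rewrite /reach xZ yZ /=.
apply: connect_trans c _; apply: connect1; by rewrite /avoid_rel /= ezy zZ yZ.
Qed.

Lemma reach_trans e Z x y w : reach e Z x y -> reach e Z y w -> reach e Z x w.
Proof.
move=> /and3P [xZ yZ c1] /and3P [_ wZ c2]; rewrite /reach xZ wZ /=.
exact: connect_trans c1 c2.
Qed.

Lemma reach_notin e Z x y : reach e Z x y -> (x \notin Z) && (y \notin Z).
Proof. by case/and3P => -> ->. Qed.

Lemma reach_mono e Z Z' x y : Z \subset Z' -> reach e Z' x y -> reach e Z x y.
Proof.
move=> sub h; have /andP [_ yZ'] := reach_notin h.
have yZ : y \notin Z by apply: contra yZ'; exact: (subsetP sub).
move: x h; apply: (reach_ind (P := fun x => reach e Z x y) yZ' (reach_refl _ yZ)).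
move=> x z xZ' exz _ h; apply: reach_cons exz _ h.
by apply: contra xZ'; exact: (subsetP sub).
Qed.

Lemma reach_first e Z x y : reach e Z x y -> x != y ->
  exists w, [/\ e x w, w \notin Z & reach e Z w y].
Proof.
move=> h; have /andP [_ yZ] := reach_notin h.
move: x h; apply: (reach_ind (P := fun x => x != y -> exists w, [/\ e x w, w \notin Z & reach e Z w y]) yZ).
  by rewrite eqxx.
move=> x z xZ exz hz _ _; exists z; split => //.
by have /andP [] := reach_notin hz.
Qed.

Lemma reach_split e Z (Bs : {set V}) x y : reach e Z x y ->
  reach e (Z :|: Bs) x y \/ exists2 b, b \in Bs & reach e Z x b /\ reach e Z b y.
Proof.
move=> h; have /andP [_ yZ] := reach_notin h.
move: x h; apply: (reach_ind (P := fun x => reach e (Z :|: Bs) x y \/ exists2 b, b \in Bs & reach e Z x b /\ reach e Z b y)) => //.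
  case: (boolP (y \in Bs)) => yB.
    by right; exists y => //; split; apply: reach_refl.
  by left; apply: reach_refl; rewrite in_setU negb_or yZ.
move=> x z xZ exz hz [hl | [b bB [h1 h2]]].
  case: (boolP (x \in Bs)) => xB.
    right; exists x => //; split; first exact: reach_refl.
    exact: reach_cons exz xZ hz.
  by left; apply: reach_cons exz _ hl; rewrite in_setU negb_or xZ.
right; exists b => //; split => //; exact: reach_cons exz xZ h1.
Qed.

Lemma reach_rev e Z x y : reach (rev_rel e) Z x y = reach e Z y x.
Proof.
apply/idP/idP => h.
  have /andP [xZ yZ] := reach_notin h.
  move: x h xZ; apply: (reach_ind (P := fun x => x \notin Z -> reach e Z y x) yZ).
    by move=> _; apply: reach_refl.
  move=> x z xZ exz hz IHz _; apply: reach_rcons (IHz _) exz xZ.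
  by have /andP [] := reach_notin hz.
have /andP [yZ xZ] := reach_notin h.
move: y h yZ; apply: (reach_ind (P := fun y => y \notin Z -> reach (rev_rel e) Z x y) xZ).
  by move=> _; apply: reach_refl.
move=> y z yZ eyz hz IHz _; apply: reach_rcons (IHz _) _ yZ => //.
by have /andP [] := reach_notin hz.
Qed.

Lemma reach0 e x y : reach e set0 x y = connect e x y.
Proof.
rewrite /reach !inE /=; apply: eq_connect => a b.
by rewrite /avoid_rel /= !inE !andbT.
Qed.

Lemma sep1 e T x y Z : is_sep e T [set x] [set y] Z =
  [&& [disjoint Z & T], [disjoint Z & [set x] :|: [set y]] & ~~ reach e Z x y].
Proof.
rewrite /is_sep; congr [&& _, _ & ~~ _]; apply/idP/idP.
  by case/existsP => x0 /andP [/set1P -> /existsP [y0 /andP [/set1P ->]]].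
move=> h; apply/existsP; exists x; rewrite set11 /=.
by apply/existsP; exists y; rewrite set11.
Qed.

Lemma sep_rev1 e T x y Z :
  is_sep (rev_rel e) T [set y] [set x] Z = is_sep e T [set x] [set y] Z.
Proof. by rewrite !sep1 reach_rev setUC. Qed.

Lemma cut_eq e1 e2 T X1 Y1 X2 Y2 :
  (forall Z, is_sep e1 T X1 Y1 Z = is_sep e2 T X2 Y2 Z) ->
  cut e1 T X1 Y1 = cut e2 T X2 Y2.
Proof. by move=> h; rewrite /cut (eq_existsb h) (eq_bigl _ _ h). Qed.

Lemma cut_rev1 e T x y :
  cut (rev_rel e) T [set y] [set x] = cut e T [set x] [set y].
Proof. by apply: cut_eq => Z; rewrite sep_rev1. Qed.

Lemma bigmin_le (I : eqType) (r : seq I) (P : pred I) (F : I -> nat) (x0 : nat) z :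
  z \in r -> P z -> \big[minn/x0]_(i <- r | P i) F i <= F z.
Proof.
elim: r => // i r IH; rewrite inE big_cons => /predU1P [<- Pz | zr Pz].
  by rewrite Pz geq_minl.
case: ifP => _; last exact: IH.
by rewrite geq_min IH ?orbT.
Qed.

Lemma cut_le e T X Y k Z : cut e T X Y = Some k -> is_sep e T X Y Z -> k <= #|Z|.
Proof.
rewrite /cut; case: ifP => // _ [<-] hZ.
by apply: bigmin_le => //; exact: mem_index_enum.
Qed.

Lemma cut_char e T X Y Z0 : is_sep e T X Y Z0 ->
  (forall Z, is_sep e T X Y Z -> #|Z0| <= #|Z|) -> cut e T X Y = Some #|Z0|.
Proof.
move=> h0 h; rewrite /cut ifT; last by apply/existsP; exists Z0.
congr Some; apply/eqP; rewrite eqn_leq; apply/andP; split.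
  by apply: bigmin_le => //; exact: mem_index_enum.
apply: (big_ind (fun m => #|Z0| <= m)); first exact: max_card.
  by move=> a b ha hb; rewrite leq_min ha hb.
exact: h.
Qed.

Lemma rs_rev e Z y w : (w \in reach_set (rev_rel e) Z [set y]) = reach e Z w y.
Proof.
rewrite /reach_set inE; apply/idP/idP.
  by case/existsP => y0 /andP [/set1P -> ]; rewrite reach_rev.
by move=> h; apply/existsP; exists y; rewrite set11 reach_rev.
Qed.

Definition msrc e T x y (Bs : {set V}) :=
  [/\ is_sep e T [set x] [set y] Bs,
      forall Z', Z' \proper Bs -> ~~ is_sep e T [set x] [set y] Z',
      forall Z', Z' != Bs -> is_sep e T [set x] [set y] Z' -> #|Z'| <= #|Bs| ->
        ~ (forall w, reach e Bs w y -> reach e Z' w y)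
    & cut e T [set x] [set y] = Some #|Bs|].

Lemma msrcP e T x y Bs :
  mincut_closest_to_source e T [set x] [set y] Bs <-> msrc e T x y Bs.
Proof.
rewrite /mincut_closest_to_source /mincut_closest_to_target /important_sep /minimal_sep.
split.
  case/andP => /andP [/andP [Hs Hmin] Himp] /eqP Hcut; split.
  - by rewrite -sep_rev1.
  - by move=> Z' HZ'; rewrite -sep_rev1; exact: (implyP (forallP Hmin Z') HZ').
  - move=> Z' Hne Hsep Hle Hinc; apply: (negP Himp); apply/existsP; exists Z'.
    rewrite Hne sep_rev1 Hsep Hle /=; apply/subsetP => w; rewrite !rs_rev; exact: Hinc.
  - by rewrite -cut_rev1.
case => Hs Hmin Himp Hcut.
rewrite sep_rev1 Hs cut_rev1 Hcut eqxx andbT /=; apply/andP; split.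
  by apply/forallP => Z'; apply/implyP => h; rewrite sep_rev1; exact: Hmin.
apply/existsP => -[Z' /and4P [Hne Hsep Hle Hsub]].
apply: (Himp Z' Hne _ Hle); first by rewrite -sep_rev1.
by move=> w; rewrite -!rs_rev; exact: (subsetP Hsub w).
Qed.

Lemma connect_transfer (e1 e2 : rel V) (P : pred V) :
  (forall a b, P a -> e1 a b -> P b && e2 a b) ->
  forall Z x y, P x -> reach e1 Z x y -> reach e2 Z x y.
Proof.
move=> H Z x y Px h; have /andP [_ yZ] := reach_notin h.
move: x h Px; apply: (reach_ind (P := fun x => P x -> reach e2 Z x y) yZ).
  by move=> _; apply: reach_refl.
move=> x z xZ exz _ IHz Px; have /andP [Pz e2xz] := H _ _ Px exz.
exact: reach_cons e2xz xZ (IHz Pz).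
Qed.

End Gen.


Section Main.
Variables (V : finType) (E : rel V) (r : nat) (s t : 'I_r -> V) (p : nat)
  (B : 'I_r -> {set V}).
Hypothesis Hst : standing E s t p.
Hypothesis HB : forall i, msrc E (terminals s t) (s i) (t i) (B i).
Local Notation T := (terminals s t).
Local Notation Es := (degree_reduced E s B).
Local Notation src := (sources s).

Lemma sinj : injective s. Proof. by case: Hst => _ [? _]. Qed.
Lemma noin i u : ~~ E u (s i). Proof. by case: Hst => _ _ [h _]. Qed.
Lemma sneqt i j : s i != t j. Proof. by case: Hst => _ [_ [_ h]]. Qed.
Lemma s_term i : s i \in T. Proof. by rewrite inE; apply/existsP; exists i; rewrite eqxx. Qed.
Lemma t_term i : t i \in T. Proof. by rewrite inE; apply/existsP; exists i; rewrite eqxx orbT. Qed.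
Lemma s_src i : s i \in src. Proof. by apply/imsetP; exists i. Qed.
Lemma src_term x : x \in src -> x \in T. Proof. by case/imsetP => i _ ->; exact: s_term. Qed.
Lemma E_nsrc u v : E u v -> v \notin src.
Proof. by move=> h; apply/imsetP => -[i _ ev]; move: h; rewrite ev (negbTE (noin i u)). Qed.

Lemma sepB i : ~~ reach E (B i) (s i) (t i).
Proof. by case: (HB i) => /[!sep1] /and3P []. Qed.
Lemma B_nT i b : b \in B i -> b \notin T.
Proof.
case: (HB i) => /[!sep1] /and3P [d _ _] _ _ _ bB.
by rewrite (disjointFr d bB).
Qed.
Lemma B_nsrc i b : b \in B i -> b \notin src.
Proof. by move=> /B_nT h; apply: contra h; exact: src_term. Qed.

Lemma Es_nsrc u v : Es u v -> v \notin src.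
Proof.
rewrite /degree_reduced /= => /or3P [/and3P [] // | /existsP [i /andP [_ vB]] |
  /existsP [i /and4P [_ /bigcupP [j _ vB] _ _]]]; exact: B_nsrc vB.
Qed.

Lemma Es_E u v : u \notin src -> Es u v = E u v.
Proof.
move=> hu; rewrite /degree_reduced /=; apply/idP/idP.
  case/or3P => [/and3P [] // | /existsP [i /andP [/eqP eu _]] | /existsP [i /and4P [/eqP eu _ _ _]]];
  by rewrite eu s_src in hu.
by move=> h; rewrite h hu (E_nsrc h).
Qed.

Lemma Es_s i v : Es (s i) v -> v \in B i \/
  [/\ v \in \bigcup_(j < r) B j, connect E (s i) v & ~~ [exists b in B i, connect E b v]].
Proof.
rewrite /degree_reduced /= => /or3P [/and3P [_ h _] | /existsP [j /andP [/eqP eu vB]] |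
  /existsP [j /and4P [/eqP eu vU Sv nb]]].
- by rewrite s_src in h.
- by left; rewrite (sinj eu).
- right; rewrite (sinj eu) in Sv nb *; split => //.
  move: Sv; rewrite inE => /existsP [k /andP [/eqP ek c]].
  by rewrite (sinj ek).
Qed.

Lemma Es_sB i v : v \in B i -> Es (s i) v.
Proof. by move=> vB; rewrite /degree_reduced /=; apply/or3P; apply: Or32; apply/existsP; exists i; rewrite eqxx. Qed.

Lemma Es_s3 i v : v \in \bigcup_(j < r) B j -> connect E (s i) v ->
  ~~ [exists b in B i, connect E b v] -> Es (s i) v.
Proof.
move=> vU c nb; rewrite /degree_reduced /=; apply/or3P; apply: Or33.
apply/existsP; exists i; rewrite eqxx vU nb andbT /=.
by rewrite inE; apply/existsP; exists i; rewrite eqxx.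
Qed.

Lemma tr1 Z x y : x \notin src -> reach Es Z x y -> reach E Z x y.
Proof.
apply: (connect_transfer (P := [pred a | a \notin src])) => a b /= ha h.
by rewrite (Es_nsrc h) -(Es_E _ ha).
Qed.

Lemma tr2 Z x y : x \notin src -> reach E Z x y -> reach Es Z x y.
Proof.
apply: (connect_transfer (P := [pred a | a \notin src])) => a b /= ha h.
by rewrite (E_nsrc h) (Es_E _ ha).
Qed.

Lemma reachE_Es Z i : reach E Z (s i) (t i) -> reach Es Z (s i) (t i).
Proof.
move=> h; case: (reach_split (B i) h) => [h1 | [b bB [h1 h2]]].
  by have := reach_mono (subsetUr Z (B i)) h1; rewrite (negbTE (sepB i)).
have /andP [sZ _] := reach_notin h1.
exact: reach_cons (Es_sB bB) sZ (tr2 (B_nsrc bB) h2).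
Qed.

Lemma Breach i b : b \in B i -> connect E (s i) b.
Proof.
move=> bB; case: (HB i) => Hs Hmin _ _.
have := Hmin _ (properD1 bB); move: Hs; rewrite !sep1 => /and3P [d1 d2 _].
rewrite (disjointWl (subD1set _ _) d1) (disjointWl (subD1set _ _) d2) /= negbK => h.
case: (reach_split [set b] h) => [h1 | [b' /set1P -> [h1 _]]].
  by move: h1; rewrite setUC setD1K // (negbTE (sepB i)).
by rewrite -reach0; apply: reach_mono (sub0set _) h1.
Qed.

Lemma cutE i : cut E T [set s i] [set t i] = Some #|B i|.
Proof. by case: (HB i). Qed.

Lemma Bp i : #|B i| <= p.
Proof.
case: Hst => _ _ _ /(_ i) [k hk kp].
by move: hk; rewrite cutE => -[->].
Qed.

Lemma part1 : #|out_nbhd Es src| <= r * p.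
Proof.
have sub : out_nbhd Es src \subset \bigcup_(i < r) B i.
  apply/subsetP => u; rewrite /out_nbhd inE => /andP [_].
  rewrite inE => /existsP [y /andP [/imsetP [i _ ->] h]].
  by case: (Es_s h) => [uB | [hu _ _] //]; apply/bigcupP; exists i.
apply: leq_trans (subset_leq_card sub) _.
apply: (@leq_trans (\sum_(i < r) #|B i|)).
  apply: (big_ind2 (fun (U : {set V}) (n : nat) => #|U| <= n)).
  - by rewrite cards0.
  - move=> U1 n1 U2 n2 h1 h2; apply: leq_trans (leq_card_setU U1 U2) _.
    exact: leq_add.
  - by [].
apply: (@leq_trans (\sum_(i < r) p)); first by apply: leq_sum => i _; exact: Bp.
by rewrite sum_nat_const card_ord.
Qed.

Lemma sepEs_E Z i : is_sep Es T [set s i] [set t i] Z -> is_sep E T [set s i] [set t i] Z.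
Proof.
rewrite !sep1 => /and3P [d1 d2 h]; rewrite d1 d2 /=.
by apply: contra h; exact: reachE_Es.
Qed.

Lemma sepEsB i : is_sep Es T [set s i] [set t i] (B i).
Proof.
case: (HB i) => Hs _ _ _; move: Hs; rewrite !sep1 => /and3P [d1 d2 _]; rewrite d1 d2 /=.
apply/negP => h; have [w [esw wB hw]] := reach_first h (sneqt i i).
have hwE := tr1 (Es_nsrc esw) hw.
case: (Es_s esw) => [wB' | [_ cw nb]]; first by rewrite wB' in wB.
rewrite -reach0 in cw.
case: (reach_split (B i) cw) => [h1 | [b bB [_ h2]]].
  rewrite set0U in h1; have := reach_trans h1 hwE.
  by rewrite (negbTE (sepB i)).
by move/negP: nb; apply; apply/existsP; exists b; rewrite bB -reach0.
Qed.

Lemma cutEs i : cut Es T [set s i] [set t i] = Some #|B i|.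
Proof.
apply: cut_char (sepEsB i) _ => Z h.
exact: cut_le (cutE i) (sepEs_E h).
Qed.

Lemma part2 i : msrc Es T (s i) (t i) (B i).
Proof.
case: (HB i) => _ Hmin Himp _; split.
- exact: sepEsB.
- by move=> Z' pr; apply/negP => h; have := Hmin Z' pr; rewrite (sepEs_E h).
- move=> Z' Hne Hsep Hle Hinc; apply: (Himp Z' Hne (sepEs_E Hsep) Hle) => w hw.
  have dZ : [disjoint Z' & T] by move: Hsep; rewrite sep1 => /and3P [].
  case: (boolP (w \in src)) => ws; last exact: tr1 ws (Hinc w (tr2 ws hw)).
  case/imsetP: ws => j _ ew; rewrite ew in hw *.
  have [y [ey yB hy]] := reach_first hw (sneqt j i).
  have yns := E_nsrc ey.
  apply: reach_cons ey _ (tr1 yns (Hinc y (tr2 yns hy))).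
  by rewrite (disjointFl dZ (s_term j)).
- exact: cutEs.
Qed.

Lemma part3 : Phi Es s t p = Phi E s t p.
Proof.
rewrite /Phi; under eq_bigr => i _ do rewrite cutEs -(cutE i).
by [].
Qed.

Lemma part4 Z : multicut Es s t Z <->
         (multicut E s t Z /\
          forall i, forall v, v \in B i ->
            v \in Z \/ is_sep E T [set v] [set t i] Z).
Proof.
split.
  case/andP => dZ /forallP hZ; split.
    rewrite /multicut dZ /=; apply/forallP => i; apply/negP => h.
    by have := hZ i; rewrite (reachE_Es h).
  move=> i v vB; case: (boolP (v \in Z)) => vZ; [by left | right].
  rewrite sep1 dZ /=; apply/andP; split.
    rewrite -setI_eq0; apply/eqP/setP => x; rewrite !inE.
    case: (eqVneq x v) => [-> | _]; first by rewrite (negbTE vZ).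
    case: (eqVneq x (t i)) => [-> | _]; last by rewrite andbF.
    by rewrite (disjointFl dZ (t_term i)).
  apply/negP => h; have := hZ i.
  by rewrite (reach_cons (Es_sB vB) (negbT (disjointFl dZ (s_term i))) (tr2 (B_nsrc vB) h)).
case => /andP [dZ _] hc; apply/andP; split => //; apply/forallP => i; apply/negP => h.
have [w [esw wZ hw]] := reach_first h (sneqt i i).
have hwE := tr1 (Es_nsrc esw) hw.
case: (Es_s esw) => [wB | [_ cw nb]].
  case: (hc i w wB) => [wZ' | hs]; first by rewrite wZ' in wZ.
  by move: hs; rewrite sep1 hwE !andbF.
rewrite -reach0 in cw.
case: (reach_split (B i) cw) => [h1 | [b bB [_ h2]]]; last first.
  by move/negP: nb; apply; apply/existsP; exists b; rewrite bB -reach0.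
rewrite set0U in h1.
case: (reach_split (B i) hwE) => [h3 | [b bB [_ h4]]].
  have := reach_trans h1 (reach_mono (subsetUr Z (B i)) h3).
  by rewrite (negbTE (sepB i)).
have /andP [bZ _] := reach_notin h4.
case: (hc i b bB) => [bZ' | hs]; first by rewrite bZ' in bZ.
by move: hs; rewrite sep1 h4 !andbF.
Qed.

Lemma part5a v : S_of Es s v \subset S_of E s v.
Proof.
apply/subsetP => x; rewrite !inE => /existsP [j /andP [/eqP -> c]].
apply/existsP; exists j; rewrite eqxx /=.
rewrite -reach0 in c.
case: (eqVneq (s j) v) => [<- | ne]; first exact: connect0.
have [w [esw _ hw]] := reach_first c ne.
have hwE := tr1 (Es_nsrc esw) hw; rewrite reach0 in hwE.
apply: connect_trans _ hwE.
by case: (Es_s esw) => [wB | [_ cw _]]; [exact: Breach | done].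
Qed.

Lemma part5b i v : Es (s i) v -> S_of Es s v = S_of E s v.
Proof.
move=> h; apply/eqP; rewrite eqEsubset part5a /=.
apply/subsetP => x; rewrite !inE => /existsP [j /andP [/eqP -> c]].
apply/existsP; exists j; rewrite eqxx /=.
have vU : v \in \bigcup_(j < r) B j.
  by case: (Es_s h) => [vB | [vU _ _] //]; apply/bigcupP; exists i.
case: (boolP [exists b in B j, connect E b v]) => [/existsP [b /andP [bB cb]] | nb].
  apply: connect_trans (connect1 (Es_sB bB)) _.
  by rewrite -reach0; apply: tr2 (B_nsrc bB) _; rewrite reach0.
by apply: connect1; exact: Es_s3 vU c nb.
Qed.

End Main.

Theorem mainTheorem11 (V : finType) (E : rel V) (r : nat)
    (s t : 'I_r -> V) (p : nat) (B : 'I_r -> {set V}) :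
  standing E s t p ->
  (forall i, mincut_closest_to_source E (terminals s t) [set s i] [set t i] (B i)) ->
  let Es := degree_reduced E s B in
  [/\ (* (1) *)
      #|out_nbhd Es (sources s)| <= r * p,
      (* (2) *)
      (forall i, mincut_closest_to_source Es (terminals s t) [set s i] [set t i] (B i)),
      (* (3) *)
      Phi Es s t p = Phi E s t p,
      (* (4) *)
      (forall Z : {set V},
         multicut Es s t Z <->
         (multicut E s t Z /\
          forall i, forall v, v \in B i ->
            v \in Z \/ is_sep E (terminals s t) [set v] [set t i] Z))
      /\
      ((exists2 Z : {set V}, multicut Es s t Z & #|Z| <= p) <->
       (exists2 Z : {set V}, multicut E s t Z /\ #|Z| <= p &
          forall i, forall v, v \in B i ->
            v \in Z \/ is_sep E (terminals s t) [set v] [set t i] Z) ) &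
      (* (5) *)
      (forall v, S_of Es s v \subset S_of E s v) /\
      (forall i v, Es (s i) v -> S_of Es s v = S_of E s v)].
Proof.
move=> Hst HB0 Es.
have HB : forall i, msrc E (terminals s t) (s i) (t i) (B i).
  by move=> i; apply/msrcP.
split.
- exact: (part1 Hst HB).
- by move=> i; apply/msrcP; exact: (part2 Hst HB).
- exact: (part3 Hst HB).
- split; first exact: (part4 Hst HB).
  split.
    case=> Z hm hz; have [hm' hc] := (part4 Hst HB Z).1 hm.
    by exists Z.
  case=> Z [hm hz] hc; exists Z => //.
  by apply/(part4 Hst HB Z).
- split; [exact: (part5a Hst HB) | exact: (part5b Hst HB)].
Qed.
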